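(* Let $0<p<1$. Then $$w_n^{\lfloor np-\epsilon(n)\rfloor}(p)\geq\frac{1}{p}-n^{-\Theta(\log n)}\qquad\text{and}\qquad w_n^{\lfloor np+\epsilon(n)\rfloor}(p)\leq n^{-\Theta(\log n)},$$ i.e. there exist functions $f,g:\mathbb{N}\to\mathbb{R}^+_0$ with $f(n)=\Theta(\log n)$ and $g(n)=\Theta(\log n)$ such that $w_n^{\lfloor np-\epsilon(n)\rfloor}(p)\geq\frac1p-n^{-f(n)}$ and $w_n^{\lfloor np+\epsilon(n)\rfloor}(p)\leq n^{-g(n)}$ for all sufficiently large $n$.
   Context: For $0<p<1$, $n\in\mathbb{N}$ and $0\le i\le n$, $w_n^i(p)=\sum_{j=i}^n\binom{j}{i}p^i(1-p)^{j-i}$. Define $\epsilon:\mathbb{N}\to\mathbb{R}^+$ by $\epsilon(n)=\sqrt{n}\log n$ for $n\geq2$ and $\epsilon(n)=1$ otherwise. For $f,g:\mathbb{N}\to\mathbb{R}^+_0$, $f(n)=\Theta(g(n))$ means there are $C_1,C_2>0$ with $C_1g(n)\le f(n)\le C_2 g(n)$ for all sufficiently large $n$. *)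

(* Defs.v *)
From Stdlib Require Import Reals Lra Lia ZArith Arith List.
Open Scope R_scope.

(* w_n^i(p) = sum_{j=i}^n C(j,i) p^i (1-p)^(j-i); empty sum (= 0) if i > n. *)
Definition w (n i : nat) (p : R) : R :=
  fold_right Rplus 0
    (map (fun j => Binomial.C j i * p ^ i * (1 - p) ^ (j - i)) (seq i (S n - i))).

Definition eps (n : nat) : R :=
  if (2 <=? n)%nat then sqrt (INR n) * ln (INR n) else 1.

Definition floorR (r : R) : Z := Int_part r.

Definition BigTheta (f g : nat -> R) : Prop :=
  exists C1 C2 : R, 0 < C1 /\ 0 < C2 /\
    exists N : nat, forall n : nat, (N <= n)%nat ->
      C1 * g n <= f n /\ f n <= C2 * g n.

Definition lnN (n : nat) : R := ln (INR n).

(* Main.v *)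
Require Import Defs.
From Stdlib Require Import Reals ZArith Lra Lia List.
Open Scope R_scope.

Fixpoint E (p : R) (m : nat) (g : nat -> R) : R :=
  match m with
  | O => g O
  | S m' => (1 - p) * E p m' g + p * E p m' (fun k => g (S k))
  end.

Lemma E_ext p m : forall g h, (forall k, g k = h k) -> E p m g = E p m h.
Proof.
  induction m as [|m IH]; intros g h H; simpl.
  - apply H.
  - rewrite (IH g h H), (IH (fun k => g (S k)) (fun k => h (S k))); auto.
Qed.

Lemma E_lin p m : forall a b g h,
  E p m (fun k => a * g k + b * h k) = a * E p m g + b * E p m h.
Proof.
  induction m as [|m IH]; intros a b g h; simpl.
  - reflexivity.
  - rewrite (IH a b g h).
    rewrite (IH a b (fun k => g (S k)) (fun k => h (S k))). ring.
Qed.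

Lemma E_scal p m a g : E p m (fun k => a * g k) = a * E p m g.
Proof.
  rewrite (E_ext p m (fun k => a * g k) (fun k => a * g k + 0 * g k)).
  - rewrite E_lin. ring.
  - intros; ring.
Qed.

Lemma E_add p m g h : E p m (fun k => g k + h k) = E p m g + E p m h.
Proof.
  rewrite (E_ext p m (fun k => g k + h k) (fun k => 1 * g k + 1 * h k)).
  - rewrite E_lin. ring.
  - intros; ring.
Qed.

Lemma E_mono p m : 0 <= p <= 1 -> forall g h, (forall k, g k <= h k) -> E p m g <= E p m h.
Proof.
  intros Hp. induction m as [|m IH]; intros g h H; simpl.
  - apply H.
  - pose proof (IH g h H). pose proof (IH (fun k => g (S k)) (fun k => h (S k)) (fun k => H (S k))).
    nra.
Qed.

Lemma E_pow p m z : E p m (fun k => z ^ k) = (1 - p + p * z) ^ m.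
Proof.
  induction m as [|m IH]; simpl.
  - reflexivity.
  - rewrite E_scal. pose proof IH as IH2. change (fun k => z ^ k) with (pow z) in IH2. rewrite IH, IH2. ring.
Qed.

Lemma E_one p m : E p m (fun _ => 1) = 1.
Proof.
  rewrite (E_ext p m (fun _ => 1) (fun k => 1 ^ k)).
  - rewrite E_pow. replace (1 - p + p * 1) with 1 by ring. apply pow1.
  - intros; rewrite pow1; auto.
Qed.

Lemma E_zero p m : forall g, (forall k, (k <= m)%nat -> g k = 0) -> E p m g = 0.
Proof.
  induction m as [|m IH]; intros g H; simpl.
  - apply H; lia.
  - rewrite (IH g), (IH (fun k => g (S k))); [ring| |]; intros k Hk; apply H; lia.
Qed.

Lemma C00 : C 0 0 = 1.
Proof. unfold C; simpl; field. Qed.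
Lemma Cn0 n : C n 0 = 1.
Proof. unfold C. rewrite Nat.sub_0_r. simpl. field. apply INR_fact_neq_0. Qed.
Lemma Cnn n : C n n = 1.
Proof. unfold C. rewrite Nat.sub_diag. simpl. field. apply INR_fact_neq_0. Qed.

Definition delta (i k : nat) : R := if Nat.eqb k i then 1 else 0.

Lemma E_delta p l : forall i,
  E p l (delta i) = if (i <=? l)%nat then C l i * p ^ i * (1 - p) ^ (l - i) else 0.
Proof.
  induction l as [|l IH]; intros i; simpl.
  - unfold delta. destruct i; simpl; [rewrite C00; ring | reflexivity].
  - destruct i as [|i].
    + rewrite (E_zero p l (fun k => delta 0 (S k))) by (intros; reflexivity).
      rewrite IH. simpl. rewrite !Cn0, Nat.sub_0_r. ring.
    + rewrite (E_ext p l (fun k => delta (S i) (S k)) (delta i)) by (intros; reflexivity).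
      rewrite !IH.
      destruct (Nat.lt_trichotomy i l) as [Hlt|[Heq|Hgt]].
      * destruct l as [|l']; [lia|].
        assert (HSi : (S i <=? S l')%nat = true) by (apply Nat.leb_le; lia).
        assert (Hi : (i <=? S l')%nat = true) by (apply Nat.leb_le; lia).
        assert (HSi' : (i <=? l')%nat = true) by (apply Nat.leb_le; lia).
        rewrite HSi, Hi.
        replace (S i <=? S (S l'))%nat with true by (symmetry; apply Nat.leb_le; lia).
        rewrite <- (pascal (S l') i) by lia.
        replace (S l' - i)%nat with (S (l' - i)) by lia.
        replace (S l' - S i)%nat with (l' - i)%nat by lia. simpl. ring.
      * subst l. rewrite Nat.leb_refl.
        assert (H1 : (S i <=? i)%nat = false) by (apply Nat.leb_gt; lia).
        rewrite H1. simpl (S i <=? S i)%nat. rewrite Nat.leb_refl, !Nat.sub_diag, !Cnn. simpl. ring.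
      * assert (H1 : (S i <=? l)%nat = false) by (apply Nat.leb_gt; lia).
        assert (H2 : (i <=? l)%nat = false) by (apply Nat.leb_gt; lia).
        rewrite H1, H2. simpl (S i <=? S l)%nat. rewrite H2. ring.
Qed.

Lemma fold_plus (l : list R) x : fold_right Rplus x l = fold_right Rplus 0 l + x.
Proof. induction l as [|a l IH]; simpl; [ring| rewrite IH; ring]. Qed.

Lemma w_S n i p :
  w (S n) i p = w n i p + (if (i <=? S n)%nat then C (S n) i * p ^ i * (1 - p) ^ (S n - i) else 0).
Proof.
  unfold w. destruct (Nat.leb_spec i (S n)) as [H|H].
  - replace (S (S n) - i)%nat with (S (S n - i)) by lia.
    assert (Hl : (i + (S n - i))%nat = S n) by lia.
    remember (S n - i)%nat as len eqn:Hlen.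
    rewrite seq_S, map_app, fold_right_app. cbn [map fold_right].
    rewrite Hl, fold_plus. replace (S n - i)%nat with len by lia. ring.
  - replace (S (S n) - i)%nat with 0%nat by lia.
    replace (S n - i)%nat with 0%nat by lia. simpl. ring.
Qed.

Lemma w_0 i p : w 0 i p = if (i =? 0)%nat then 1 else 0.
Proof.
  unfold w. destruct i; simpl; [rewrite C00; ring | reflexivity].
Qed.

Definition indi (s k : nat) : R := if (s <=? k)%nat then 1 else 0.

Lemma w_E p n : forall i, p * w n i p = E p (S n) (indi (S i)).
Proof.
  induction n as [|n IH]; intros i.
  - rewrite w_0. simpl. unfold indi. destruct i; simpl; ring.
  - rewrite w_S. rewrite <- E_delta.
    change (E p (S (S n)) (indi (S i))) with
      ((1 - p) * E p (S n) (indi (S i)) + p * E p (S n) (fun k => indi (S i) (S k))).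
    rewrite (E_ext p (S n) (fun k => indi (S i) (S k)) (fun k => indi (S i) k + delta i k)).
    + rewrite E_add, <- IH. set (D := E p (S n) (delta i)). change (E p (S n) (fun k => delta i k)) with D. ring.
    + intros k. unfold indi, delta. change (S i <=? S k)%nat with (i <=? k)%nat.
      destruct (Nat.leb_spec i k), (Nat.leb_spec (S i) k), (Nat.eqb_spec k i); try lia; ring.
Qed.

Lemma exp_pow a n : exp a ^ n = exp (INR n * a).
Proof.
  induction n as [|n IH].
  - simpl. rewrite Rmult_0_l, exp_0. reflexivity.
  - rewrite S_INR. simpl. rewrite IH, <- exp_plus. f_equal. ring.
Qed.

Lemma pow_le_exp a b n : 0 <= a -> a <= exp b -> a ^ n <= exp (INR n * b).
Proof.
  intros H1 H2. rewrite <- exp_pow. apply pow_incr. lra.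
Qed.

Lemma pow_le1 z n : 0 <= z <= 1 -> z ^ n <= 1.
Proof.
  intros H. rewrite <- (pow1 n). apply pow_incr. lra.
Qed.

Lemma chern_low p m i : 0 < p < 1 -> (0 < m)%nat ->
  0 < INR m * p - INR i -> INR m * p - INR i <= INR m ->
  E p m (fun k => 1 - indi (S i) k) <=
  exp (- (INR m * p - INR i) ^ 2 / (8 * INR m)).
Proof.
  intros Hp Hm Ht1 Ht2.
  set (M := INR m) in *. set (t := M * p - INR i) in *.
  assert (HM : 0 < M) by (apply lt_0_INR; exact Hm).
  set (d := t / (4 * M)).
  assert (Hd : t = 4 * M * d) by (unfold d; field; lra).
  assert (Hd0 : 0 < d) by (unfold d; apply Rdiv_lt_0_compat; lra).
  assert (Hd1 : d <= 1/4) by (unfold d; apply Rmult_le_reg_r with (4*M); [lra|]; field_simplify; lra).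
  set (z := 1 - d).
  assert (Hz : 0 < z) by (unfold z; lra).
  assert (Hzi : 0 < z ^ i) by (apply pow_lt; lra).
  apply Rle_trans with (E p m (fun k => / z ^ i * z ^ k)).
  { apply E_mono; [lra|]. intros k. unfold indi.
    destruct (Nat.leb_spec (S i) k) as [Hk|Hk].
    - assert (0 < z ^ k) by (apply pow_lt; lra).
      assert (0 < / z ^ i) by (apply Rinv_0_lt_compat; lra). nra.
    - replace i with (k + (i - k))%nat by lia. rewrite pow_add.
      assert (0 < z ^ k) by (apply pow_lt; lra).
      assert (0 < z ^ (i - k)) by (apply pow_lt; lra).
      assert (z ^ (i - k) <= 1) by (apply pow_le1; unfold z; lra).
      rewrite Rinv_mult, Rmult_assoc, (Rmult_comm (/ z ^ (i - k))), <- Rmult_assoc,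
        Rinv_l by lra.
      rewrite Rmult_1_l.
      assert (1 <= / z ^ (i - k)).
      { rewrite <- Rinv_1. apply Rinv_le_contravar; lra. }
      lra. }
  rewrite E_scal, E_pow, <- pow_inv.
  assert (Hi : INR i <= M) by (assert (M * p <= M) by nra; unfold t in Ht1; lra).
  assert (H1 : (/ z) ^ i <= exp (INR i * (d + 2 * d ^ 2))).
  { apply pow_le_exp. left; apply Rinv_0_lt_compat; lra.
    apply Rle_trans with (1 + (d + 2 * d ^ 2)); [|apply exp_ineq1_le].
    apply Rmult_le_reg_l with z; [lra|]. rewrite Rinv_r by lra. unfold z. nra. }
  assert (H2 : (1 - p + p * z) ^ m <= exp (M * (- (p * d)))).
  { apply pow_le_exp. unfold z; nra.
    apply Rle_trans with (1 + - (p * d)); [unfold z; lra|apply exp_ineq1_le]. }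
  apply Rle_trans with (exp (INR i * (d + 2 * d ^ 2)) * exp (M * (- (p * d)))).
  { apply Rmult_le_compat; auto. left; apply pow_lt, Rinv_0_lt_compat; lra.
    apply pow_le. unfold z; nra. }
  rewrite <- exp_plus.
  assert (Harg : INR i * (d + 2 * d ^ 2) + M * - (p * d) <= - t ^ 2 / (8 * M)).
  { assert (INR i = M * p - t) by (unfold t; ring).
    rewrite H. rewrite Hd. field_simplify; [|lra]. 
    assert (Hi' : M * p - 4 * M * d <= M) by lra. replace (-16 * M ^ 2 * d ^ 2 / (8 * M)) with (-2 * M * d ^ 2) by (field; lra). assert (0 < M * d ^ 2) by (apply Rmult_lt_0_compat; [lra|apply pow_lt; lra]). nra. }
  destruct Harg as [Hlt|Heq]; [left; apply exp_increasing; exact Hlt|rewrite Heq; right; reflexivity].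
Qed.

Lemma chern_up p m s : 0 < p < 1 -> (0 < m)%nat -> (s <= m)%nat ->
  0 < INR s - INR m * p ->
  E p m (indi s) <= exp (- (INR s - INR m * p) ^ 2 / (8 * INR m)).
Proof.
  intros Hp Hm Hsm Ht1.
  set (M := INR m) in *. set (t := INR s - M * p) in *.
  assert (HM : 0 < M) by (apply lt_0_INR; exact Hm).
  assert (Hs : INR s <= M) by (apply le_INR; exact Hsm).
  assert (Ht2 : t <= M) by (unfold t; nra).
  set (d := t / (2 * M)).
  assert (Hd : t = 2 * M * d) by (unfold d; field; lra).
  assert (Hd0 : 0 < d) by (unfold d; apply Rdiv_lt_0_compat; lra).
  assert (Hd1 : d <= 1/2) by (unfold d; apply Rmult_le_reg_r with (2*M); [lra|]; field_simplify; lra).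
  set (z := 1 + d).
  assert (Hz : 1 <= z) by (unfold z; lra).
  assert (Hzs : 0 < z ^ s) by (apply pow_lt; lra).
  apply Rle_trans with (E p m (fun k => / z ^ s * z ^ k)).
  { apply E_mono; [lra|]. intros k. unfold indi.
    destruct (Nat.leb_spec s k) as [Hk|Hk].
    - assert (z ^ s <= z ^ k) by (apply Rle_pow; auto).
      apply Rmult_le_reg_l with (z ^ s); [lra|].
      rewrite <- Rmult_assoc, Rinv_r by lra. lra.
    - assert (0 < z ^ k) by (apply pow_lt; lra).
      assert (0 < / z ^ s) by (apply Rinv_0_lt_compat; lra). nra. }
  rewrite E_scal, E_pow, <- pow_inv.
  assert (H1 : (/ z) ^ s <= exp (INR s * (- d + d ^ 2))).
  { apply pow_le_exp. left; apply Rinv_0_lt_compat; lra.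
    apply Rle_trans with (1 + (- d + d ^ 2)); [|apply exp_ineq1_le].
    apply Rmult_le_reg_l with z; [lra|]. rewrite Rinv_r by lra. unfold z. nra. }
  assert (H2 : (1 - p + p * z) ^ m <= exp (M * (p * d))).
  { apply pow_le_exp. unfold z; nra.
    apply Rle_trans with (1 + (p * d)); [unfold z; lra|apply exp_ineq1_le]. }
  apply Rle_trans with (exp (INR s * (- d + d ^ 2)) * exp (M * (p * d))).
  { apply Rmult_le_compat; auto. left; apply pow_lt, Rinv_0_lt_compat; lra.
    apply pow_le. unfold z; nra. }
  rewrite <- exp_plus.
  assert (Harg : INR s * (- d + d ^ 2) + M * (p * d) <= - t ^ 2 / (8 * M)).
  { assert (INR s = M * p + t) by (unfold t; ring).
    rewrite H. rewrite Hd. field_simplify; [|lra].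
    replace (-4 * M ^ 2 * d ^ 2 / (8 * M)) with (- M * d ^ 2 / 2) by (field; lra).
    assert (0 < M * d ^ 2) by (apply Rmult_lt_0_compat; [lra|apply pow_lt; lra]).
    assert (M * p + 2 * M * d <= M) by lra. nra. }
  destruct Harg as [Hlt|Heq]; [left; apply exp_increasing; exact Hlt|rewrite Heq; right; reflexivity].
Qed.

Lemma ln_ge0 n : 0 <= ln (INR n).
Proof.
  destruct n as [|n].
  - unfold ln. destruct (Rlt_dec 0 (INR 0)) as [h|h]. exfalso; pose proof h as h2; rewrite INR_0 in h2; lra. lra.
  - rewrite <- ln_1. destruct (Nat.eq_dec n 0) as [->|Hn].
    + simpl. lra.
    + left. apply ln_increasing; [lra|]. rewrite S_INR.
      assert (0 < INR n) by (apply lt_0_INR; lia). lra.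
Qed.

Lemma ln_le x y : 0 < x -> x <= y -> ln x <= ln y.
Proof. intros H1 [H2|H2]; [left; apply ln_increasing; auto| subst; lra]. Qed.

Lemma final p n T : 0 < p < 1 -> 1 <= INR n ->
  1 <= ln (INR n) -> 128 * (- ln p) <= ln (INR n) -> 0 <= T ->
  INR n * ln (INR n) ^ 2 / 4 <= T ^ 2 ->
  exp (- T ^ 2 / (8 * (INR n + 1))) <= p * exp (- (ln (INR n) / 128) * ln (INR n)).
Proof.
  intros Hp Hn HL1 HL2 HT HT2.
  set (Ln := ln (INR n)) in *. set (X := INR n) in *.
  rewrite <- (exp_ln p) by lra. rewrite <- exp_plus.
  set (A := T ^ 2 / (8 * (X + 1))).
  assert (HA : A * (8 * (X + 1)) = T ^ 2) by (unfold A; field; lra).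
  assert (HA0 : 0 <= A) by (unfold A; apply Rmult_le_pos; [nra| left; apply Rinv_0_lt_compat; lra]).
  assert (HA1 : Ln ^ 2 / 64 <= A).
  { assert (A * (16 * X) >= X * Ln ^ 2 / 4) by nra.
    apply Rmult_le_reg_r with X; [lra|]. nra. }
  replace (- T ^ 2 / (8 * (X + 1))) with (- A) by (unfold A; field; lra).
  assert (Ln * Ln >= Ln) by nra.
  assert (- A <= ln p + - (Ln / 128) * Ln) by nra.
  destruct H0 as [H0|H0]; [left; apply exp_increasing; auto | rewrite H0; right; reflexivity].
Qed.

Lemma INR_floor_nat x : 0 <= x -> INR (Z.to_nat (floorR x)) = IZR (floorR x) /\ IZR (floorR x) <= x /\ x - 1 < IZR (floorR x).
Proof.
  intros Hx. unfold floorR. destruct (base_Int_part x) as [H1 H2].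
  assert (H0 : (0 <= Int_part x)%Z).
  { assert (-1 < IZR (Int_part x)) by lra.
    apply lt_IZR in H. lia. }
  split; [|split; lra].
  rewrite INR_IZR_INZ, Z2Nat.id by exact H0. reflexivity.
Qed.

Lemma deficit p n i : 0 < p -> 1 / p - w n i p = E p (S n) (fun k => 1 - indi (S i) k) / p.
Proof.
  intros Hp.
  rewrite (E_ext p (S n) (fun k => 1 - indi (S i) k) (fun k => 1 * 1 + (-1) * indi (S i) k)) by (intros; ring).
  rewrite E_lin, E_one, <- w_E. field. lra.
Qed.

Lemma w_eq p n j : 0 < p -> w n j p = E p (S n) (indi (S j)) / p.
Proof. intros Hp. rewrite <- w_E. field. lra. Qed.

Theorem corollary2 (p : R) (hp0 : 0 < p) (hp1 : p < 1) :
  exists f g : nat -> R,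
    (forall n, 0 <= f n) /\ (forall n, 0 <= g n) /\
    BigTheta f lnN /\ BigTheta g lnN /\
    exists N : nat, forall n : nat, (N <= n)%nat ->
      w n (Z.to_nat (floorR (INR n * p - eps n))) p
        >= 1 / p - Rpower (INR n) (- f n) /\
      w n (Z.to_nat (floorR (INR n * p + eps n))) p
        <= Rpower (INR n) (- g n).
Proof.
  set (h := fun n : nat => ln (INR n) / 128).
  assert (Hh0 : forall n, 0 <= h n) by (intros; unfold h; pose proof (ln_ge0 n); lra).
  assert (HT : BigTheta h lnN).
  { exists (1/128), (1/128). split; [lra|split; [lra|]]. exists 0%nat. intros n _.
    unfold h, lnN. split; right; field. }
  exists h, h. split; [auto|split; [auto|split; [auto|split; [auto|]]]].
  assert (HlnP : ln p < 0) by (rewrite <- ln_1; apply ln_increasing; lra).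
  set (K := 2 + 128 * (- ln p)).
  destruct (INR_unbounded (exp K + (4 / p) ^ 4 + 2)) as [N HN].
  exists N. intros n Hn.
  assert (HnN : INR N <= INR n) by (apply le_INR; exact Hn).
  assert (HeK : 0 < exp K) by apply exp_pos.
  assert (H4p : 0 < (4 / p) ^ 4) by (apply pow_lt; apply Rdiv_lt_0_compat; lra).
  set (X := INR n) in *.
  assert (HX2 : 2 < X) by lra.
  assert (Hn2 : (2 <= n)%nat).
  { destruct (le_lt_dec 2 n) as [h2|h2]; auto. exfalso.
    assert (INR n <= INR 1) by (apply le_INR; lia). simpl in H. unfold X in HX2. lra. }
  set (Ln := ln X).
  assert (HLK : K <= Ln) by (unfold Ln; rewrite <- (ln_exp K); apply ln_le; lra).
  assert (Heps : eps n = sqrt X * Ln).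
  { unfold eps. replace (2 <=? n)%nat with true by (symmetry; apply Nat.leb_le; exact Hn2). reflexivity. }
  set (u := sqrt (sqrt X)).
  assert (Hu0 : 0 <= u) by apply sqrt_pos.
  assert (Hsq : sqrt X = u * u) by (unfold u; rewrite sqrt_sqrt; [reflexivity|apply sqrt_pos]).
  assert (HXu : X = u ^ 4).
  { replace (u ^ 4) with (sqrt X * sqrt X) by (rewrite Hsq; ring). rewrite sqrt_sqrt; lra. }
  assert (Hup : 4 / p <= u).
  { destruct (Rle_lt_dec (4/p) u) as [hh|hh]; auto. exfalso.
    assert (u ^ 4 <= (4/p) ^ 4) by (apply pow_incr; lra). lra. }
  assert (Hu1 : 4 < u).
  { assert (4 / p > 4). { apply Rmult_gt_reg_l with p; [lra|]. field_simplify; lra. } lra. }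
  assert (HLu : Ln <= 4 * u).
  { assert (Ln = 4 * ln u).
    { unfold Ln. rewrite HXu, ln_pow by lra. simpl. ring. }
    assert (ln u <= u - 1).
    { pose proof (exp_ineq1_le (ln u)). rewrite exp_ln in H0 by lra. lra. }
    lra. }
  assert (HlnP' : 0 < - ln p) by lra.
  assert (HL1 : 1 <= Ln) by (unfold K in HLK; lra).
  assert (HL2 : 128 * (- ln p) <= Ln) by (unfold K in HLK; lra).
  assert (Hsx : 1 <= sqrt X) by (rewrite Hsq; nra).
  assert (Heps2 : 2 <= eps n) by (rewrite Heps; nra).
  assert (Heps_sq : eps n ^ 2 = X * Ln ^ 2).
  { rewrite Heps. replace ((sqrt X * Ln) ^ 2) with ((sqrt X * sqrt X) * Ln ^ 2) by ring.
    rewrite sqrt_sqrt; lra. }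
  assert (HSn : INR (S n) = X + 1) by (rewrite S_INR; reflexivity).
  assert (HRp : Rpower X (- h n) = exp (- (Ln / 128) * Ln)) by reflexivity.
  split.
  -
    assert (Hpos : 0 <= X * p - eps n).
    { rewrite Heps, Hsq, HXu. assert (0 <= u ^ 3) by (apply pow_le; lra).
      assert (u * p >= 4).
      { assert (H5 : 4 / p * p <= u * p) by (apply Rmult_le_compat_r; lra).
        replace (4 / p * p) with 4 in H5 by (field; lra). lra. }
      nra. }
    destruct (INR_floor_nat (X * p - eps n)) as [Hi1 [Hi2 Hi3]]; [lra|].
    set (i := Z.to_nat (floorR (X * p - eps n))) in *.
    apply Rle_ge. rewrite HRp.
    assert (Hd := deficit p n i hp0).
    assert (HiX : 0 <= INR i) by apply pos_INR.
    assert (Hlow := chern_low p (S n) i (conj hp0 hp1) ltac:(lia)).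
    rewrite HSn in Hlow.
    assert (Ht : eps n + p <= (X + 1) * p - INR i) by lra.
    specialize (Hlow ltac:(lra) ltac:(nra)).
    assert (Hfin := final p n ((X + 1) * p - INR i) (conj hp0 hp1) ltac:(fold X; lra) HL1 HL2 ltac:(lra)).
    fold X in Hfin. fold Ln in Hfin.
    assert (Hf2 : X * Ln ^ 2 / 4 <= ((X + 1) * p - INR i) ^ 2) by nra.
    specialize (Hfin Hf2).
    assert (E p (S n) (fun k => 1 - indi (S i) k) / p <= exp (- (Ln / 128) * Ln)).
    { apply Rmult_le_reg_l with p; [lra|]. replace (p * (E p (S n) (fun k => 1 - indi (S i) k) / p))
        with (E p (S n) (fun k => 1 - indi (S i) k)) by (field; lra). lra. }
    lra.
  -
    assert (Hpos : 0 <= X * p + eps n) by nra.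
    destruct (INR_floor_nat (X * p + eps n)) as [Hj1 [Hj2 Hj3]]; [lra|].
    set (j := Z.to_nat (floorR (X * p + eps n))) in *.
    rewrite HRp, (w_eq p n j hp0).
    assert (0 < exp (- (Ln / 128) * Ln)) by apply exp_pos.
    destruct (le_lt_dec (S j) (S n)) as [Hjn|Hjn].
    + assert (Hup2 := chern_up p (S n) (S j) (conj hp0 hp1) ltac:(lia) Hjn).
      rewrite HSn, S_INR in Hup2.
      assert (Ht : eps n - p < INR j + 1 - (X + 1) * p) by lra.
      specialize (Hup2 ltac:(lra)).
      assert (Hfin := final p n (INR j + 1 - (X + 1) * p) (conj hp0 hp1) ltac:(fold X; lra) HL1 HL2 ltac:(lra)).
      fold X in Hfin. fold Ln in Hfin.
      assert (Hf2 : X * Ln ^ 2 / 4 <= (INR j + 1 - (X + 1) * p) ^ 2) by nra.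
      specialize (Hfin Hf2).
      apply Rmult_le_reg_l with p; [lra|]. replace (p * (E p (S n) (indi (S j)) / p))
        with (E p (S n) (indi (S j))) by (field; lra). lra.
    + rewrite (E_zero p (S n) (indi (S j))).
      * unfold Rdiv. rewrite Rmult_0_l. lra.
      * intros k Hk. unfold indi. destruct (Nat.leb_spec (S j) k); [lia|reflexivity].
Qed.
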